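(* Let $G$ be a symmetrically factorizable Lie group with subgroups $G_\pm$, and suppose both $\theta$ and $\theta^{-1}$ are conjugating elements. Then for any $g\in G$ (for which the factorizations exist), \[ \bigl(\theta g^{-1}\theta^{-1}\bigr)_\pm=\theta g_\mp\theta^{-1}. \]
   Context: A Lie group $G$ with Lie algebra $\mathfrak g$ is symmetrically factorizable if $\mathfrak g=\mathfrak g_+\oplus\mathfrak g_-$ as a vector space with $\mathfrak g_\pm$ Lie subalgebras, and there is $\theta\in G$ (a conjugating element) with $\theta G_-=G_+\theta$, where $G_\pm$ are the Lie subgroups corresponding to $\mathfrak g_\pm$. For $g$ in an open dense subset one writes $g=g_+g_-^{-1}$ with $g_\pm\in G_\pm$, and $(h)_\pm$ denotes the factors $h_\pm$ of an element $h$. *)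

(* Defs.v *)
Set Implicit Arguments.

Record Group := {
  carrier :> Type;
  gmul : carrier -> carrier -> carrier;
  ginv : carrier -> carrier;
  gone : carrier;
  gmulA : forall x y z, gmul x (gmul y z) = gmul (gmul x y) z;
  gmul1l : forall x, gmul gone x = x;
  gmul1r : forall x, gmul x gone = x;
  gmulVl : forall x, gmul (ginv x) x = gone;
  gmulVr : forall x, gmul x (ginv x) = gone
}.

Arguments gmul {g} _ _.
Arguments ginv {g} _.
Arguments gone {g}.

Definition is_subgroup {G : Group} (H : G -> Prop) : Prop :=
  H gone /\ (forall x y, H x -> H y -> H (gmul x y)) /\ (forall x, H x -> H (ginv x)).

(** theta is a conjugating element: theta G_- = G_+ theta (equality of sets). *)
Definition conjugating {G : Group} (Gp Gm : G -> Prop) (theta : G) : Prop :=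
  forall x : G,
    (exists y, Gm y /\ x = gmul theta y) <-> (exists z, Gp z /\ x = gmul z theta).

(** (h)_+ = a and (h)_- = b : h = a b^{-1} with a in G_+ and b in G_-. *)
Definition factorization {G : Group} (Gp Gm : G -> Prop) (h a b : G) : Prop :=
  Gp a /\ Gm b /\ h = gmul a (ginv b).

(* Main.v *)
Require Import Defs.

Arguments gmulA {g} _ _ _.
Arguments gmul1l {g} _.
Arguments gmul1r {g} _.
Arguments gmulVl {g} _.
Arguments gmulVr {g} _.
Section L.
Variable G : Group.
Lemma cancel_l (a x y : G) : gmul a x = gmul a y -> x = y.
Proof. intro H. rewrite <- (gmul1l x), <- (gmul1l y), <- (gmulVl a), <- !gmulA, H. reflexivity. Qed.
Lemma inv_mul (a b : G) : ginv (gmul a b) = gmul (ginv b) (ginv a).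
Proof. apply (cancel_l (gmul a b)). rewrite gmulVr, <- !gmulA, (gmulA b), gmulVr, gmul1l, gmulVr. reflexivity. Qed.
Lemma inv_inv (a : G) : ginv (ginv a) = a.
Proof. apply (cancel_l (ginv a)). rewrite gmulVr, gmulVl. reflexivity. Qed.
End L.

Theorem mainTheorem6 (G : Group) (Gp Gm : G -> Prop) (theta : G)
  (hGp : is_subgroup Gp) (hGm : is_subgroup Gm)
  (hth : conjugating Gp Gm theta) (hthi : conjugating Gp Gm (ginv theta))
  (g gp gm : G) (hg : factorization Gp Gm g gp gm) :
  factorization Gp Gm
    (gmul (gmul theta (ginv g)) (ginv theta))
    (gmul (gmul theta gm) (ginv theta))
    (gmul (gmul theta gp) (ginv theta)).
Proof.
  destruct hg as [Hp [Hm Hg]].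
  split; [|split].
  - destruct (proj1 (hth (gmul theta gm)) (ex_intro _ gm (conj Hm eq_refl))) as [z [Hz E]].
    rewrite E, <- gmulA, gmulVr, gmul1r. exact Hz.
  - destruct (proj2 (hthi (gmul gp (ginv theta))) (ex_intro _ gp (conj Hp eq_refl))) as [y [Hy E]].
    replace (gmul (gmul theta gp) (ginv theta)) with y; [exact Hy|].
    rewrite <- gmulA, E, gmulA, gmulVr, gmul1l. reflexivity.
  - subst g. rewrite !inv_mul, !inv_inv.
    rewrite <- !gmulA. f_equal. f_equal. rewrite (gmulA (ginv theta) theta), gmulVl, gmul1l. reflexivity.
Qed.
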